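(* Let $\mathbf S$ be a complete semilattice. Then the set $\Gamma$ of all non-generators of $\mathbf S$ is a complete subsemilattice of $\mathbf S$, and $\Gamma$ equals the intersection of all maximal proper complete subsemilattices of $\mathbf S$ (this intersection being $S$ itself if there are no maximal proper complete subsemilattices).
   Context: A complete semilattice is a partially ordered set $S$ in which every subset, including the empty set, has a meet (infimum) $\bigwedge$; in particular $S$ has a maximum. A complete subsemilattice of $\mathbf S$ is a subset $T\subseteq S$ such that for every $Y\subseteq T$ (including $Y=\emptyset$, so $T$ contains the maximum of $S$) the meet $\bigwedge Y$ computed in $S$ lies in $T$. For $X\subseteq S$, $\langle X\rangle$ denotes the complete subsemilattice generated by $X$, i.e. the intersection of all complete subsemilattices containing $X$, and $\langle X,a\rangle=\langle X\cup\{a\}\rangle$. An element $a\in S$ is a non-generator if for every $X\subseteq S$, $\langle X,a\rangle=S$ implies $\langle X\rangle=S$; otherwise $a$ is a relative generator. A maximal proper complete subsemilattice is a complete subsemilattice $T\neq S$ not properly contained in any complete subsemilattice other than $S$. *)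

(* Defs.v *)
Definition subset {T : Type} (A B : T -> Prop) : Prop := forall x, A x -> B x.

Definition full {T : Type} (A : T -> Prop) : Prop := forall x, A x.

Definition partial_order {T : Type} (le : T -> T -> Prop) : Prop :=
  (forall x, le x x) /\
  (forall x y, le x y -> le y x -> x = y) /\
  (forall x y z, le x y -> le y z -> le x z).

Definition is_meet {T : Type} (le : T -> T -> Prop) (Y : T -> Prop) (m : T) : Prop :=
  (forall y, Y y -> le m y) /\ (forall z, (forall y, Y y -> le z y) -> le z m).

Definition complete_semilattice {T : Type} (le : T -> T -> Prop) : Prop :=
  partial_order le /\ forall Y : T -> Prop, exists m, is_meet le Y m.

(* A is closed under all meets computed in S (Y = empty gives the maximum) *)
Definition complete_subsemilattice {T : Type} (le : T -> T -> Prop) (A : T -> Prop) : Prop :=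
  forall Y : T -> Prop, subset Y A -> forall m, is_meet le Y m -> A m.

Definition generated {T : Type} (le : T -> T -> Prop) (X : T -> Prop) : T -> Prop :=
  fun x => forall A, complete_subsemilattice le A -> subset X A -> A x.

Definition add_elt {T : Type} (X : T -> Prop) (a : T) : T -> Prop :=
  fun x => X x \/ x = a.

Definition non_generator {T : Type} (le : T -> T -> Prop) (a : T) : Prop :=
  forall X : T -> Prop, full (generated le (add_elt X a)) -> full (generated le X).

Definition maximal_proper_css {T : Type} (le : T -> T -> Prop) (M : T -> Prop) : Prop :=
  complete_subsemilattice le M /\ ~ full M /\
  forall B, complete_subsemilattice le B -> subset M B -> subset B M \/ full B.

Definition non_generators {T : Type} (le : T -> T -> Prop) : T -> Prop :=
  fun a => non_generator le a.

Definition meet_of_maximals {T : Type} (le : T -> T -> Prop) : T -> Prop :=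
  fun x => forall M, maximal_proper_css le M -> M x.

(* Main.v *)
Require Import Defs.
From Stdlib Require Import Classical.

Lemma gen_css {T : Type} (le : T -> T -> Prop) (X : T -> Prop) :
  complete_subsemilattice le (generated le X).
Proof.
  intros Y HY m Hm A HA HXA. apply (HA Y); auto.
  intros y Hy. apply HY; auto.
Qed.

Lemma gen_sub {T : Type} (le : T -> T -> Prop) (X A : T -> Prop) :
  complete_subsemilattice le A -> subset X A -> subset (generated le X) A.
Proof. intros HA HXA x Hx. apply Hx; auto. Qed.

Lemma easy_dir {T : Type} (le : T -> T -> Prop) a :
  non_generator le a -> meet_of_maximals le a.
Proof.
  intros Hng M [HM [Hnf Hmax]].
  apply NNPP; intro Ha.
  destruct (Hmax (generated le (add_elt M a)) (gen_css _ _)) as [Hs | Hf].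
  - intros x Hx A HA HXA. apply HXA. left; auto.
  - apply Ha, Hs. intros A HA HXA. apply HXA. right; auto.
  - apply Hnf. intro x. apply (gen_sub le M M HM (fun y h => h)). apply (Hng M Hf).
Qed.

Lemma hard_dir {T : Type} (le : T -> T -> Prop) (hS : complete_semilattice le) a :
  meet_of_maximals le a -> non_generator le a.
Proof.
  destruct hS as [[Hrefl [Hanti Htrans]] _].
  intros Hm X Hfull. apply NNPP; intro Hnf.
  set (C := generated le X).
  assert (HaC : ~ C a).
  { intro HaC. apply Hnf. intro x.
    apply (gen_sub le (add_elt X a) C (gen_css _ _)).
    - intros y [Hy | ->]; auto. intros A HA HXA; auto.
    - apply Hfull. }
  assert (HD : forall s, C s \/ le s a).
  { intro s.
    apply (gen_sub le (add_elt X a) (fun s => C s \/ le s a)); [| | apply Hfull].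
    - intros Y HY m [Hlb Hglb].
      destruct (classic (exists y, Y y /\ ~ C y)) as [[y [Hy HyC]] | Hno].
      + right. destruct (HY y Hy) as [H | H]; [contradiction|].
        apply Htrans with y; auto.
      + left. apply (gen_css le X Y); [| split; auto].
        intros y Hy. apply NNPP; intro H. apply Hno; eauto.
    - intros y [Hy | ->].
      + left. intros A HA HXA; auto.
      + right; auto. }
  assert (Hmax : maximal_proper_css le (fun s => s <> a)).
  { split; [| split].
    - intros Y HY m [Hlb Hglb] Hma. subst m.
      apply HaC. apply (gen_css le X Y); [| split; auto].
      intros y Hy. destruct (HD y) as [H | H]; auto.
      exfalso. apply (HY y Hy). apply Hanti; auto.
    - intro H. apply (H a); auto.
    - intros B HB HsB.
      destruct (classic (B a)) as [Hba | Hba].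
      + right. intro x. destruct (classic (x = a)) as [-> | Hx]; auto.
      + left. intros x Hx Hxa. subst. contradiction. }
  apply (Hm _ Hmax). reflexivity.
Qed.

Theorem proposition1 (T : Type) (le : T -> T -> Prop)
  (hS : complete_semilattice le) :
  complete_subsemilattice le (non_generators le) /\
  (forall x, non_generators le x <-> meet_of_maximals le x).
Proof.
  assert (Heq : forall x, non_generators le x <-> meet_of_maximals le x).
  { intro x. split; [apply easy_dir | apply hard_dir; auto]. }
  split; auto.
  intros Y HY m Hm. apply Heq. intros M HM.
  destruct HM as [HMc HM']. apply (HMc Y); auto.
  intros y Hy. apply (proj1 (Heq y) (HY y Hy)). split; auto.
Qed.
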